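(* Suppose the hypotheses of Theorem 1 hold (Assumptions 1 and 2, $J_0\ne\emptyset$, $0<\delta<1$, Condition (L) for all $j$ with $c'\in(0,1)$ satisfying Condition (C)), and let $c_1$ be the constant depending only on $\delta$ for which the bound $$\mathbb P(J_0\subseteq\hat J_0)\ge 1-\mathbb P(\mathcal E_{\delta,q^*}^c)-e^{-\frac{3n}{16 d_{q^*}}}-\sum_{l=1}^s\sum_{m=0}^{q^*-(s-l)}\binom{s}{l}\binom{q-s}{m}4\exp\Big(-c_1\frac{n^2(1-\rho_{q^*}^2)^2\kappa_l^2}{\sigma^4d_{q^*-s+l}+\sigma^2n(1-\rho_{q^*}^2)\kappa_l}\Big)$$ holds. Then for each $c_2>0$ there is $c_3>0$ depending only on $c_1$ and $c_2$ such that $\mathbb P(J_0\subseteq\hat J_0)\ge1-\mathbb P(\mathcal E_{\delta,q^*}^c)-q^{-c_2}$, provided $$\max\Big\{\frac{\sigma^2\sqrt{q^*d_{q^*}\log(eq/q^* )}}{(1-\rho_{q^*}^2)\kappa},\ \frac{\sigma^2q^*\log(eq/q^* )}{(1-\rho_{q^*}^2)\kappa},\ d_{q^*}\log q\Big\}\le c_3n.$$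
   Context: Let $q\ge1$ and let $(Y,X)$ be a pair of random variables with $X=(X_1,\dots,X_q)^T$, each $X_j$ real-valued, and $Y=\sum_{j=1}^q f_j(X_j)+\epsilon$, where $f_j\in L^2(\mathbb P^{X_j})$, $\mathbb E[f_j(X_j)]=0$ for $j=1,\dots,q-1$, and $\epsilon$ is a centered Gaussian variable with variance $\sigma^2$, independent of $X$. The space $L^2(\mathbb P^X)$ carries the inner product $\langle g,h\rangle=\mathbb E[g(X)h(X)]$ and norm $\|g\|=\langle g,g\rangle^{1/2}$. Let $H_q=L^2(\mathbb P^{X_q})$ and $H_j=\{h\in L^2(\mathbb P^{X_j}):\mathbb E[h(X_j)]=0\}$ for $j<q$, viewed as subspaces of $L^2(\mathbb P^X)$ via $x\mapsto h(x_j)$; for $J\subseteq\{1,\dots,q\}$ let $H_J=\sum_{j\in J}H_j$ (with $H_\emptyset=\{0\}$). Let $J_0=\{j:\|f_j\|>0\}$, $s=|J_0|$, and let $q^*$ be an integer with $s\le q^*$. Let $\rho_{q^*}$ be the supremum of $\langle h_1,h_2\rangle/(\|h_1\|\|h_2\|)$ over all nonzero $h_1\in H_{J_1}$, $h_2\in H_{J_2}$ and all $J_1,J_2\subseteq\{1,\dots,q\}$ with $J_1\cap J_2=\emptyset$ and $|J_1|,|J_2|\le q^*$. Assumption 1 is the condition $\rho_{q^*}<1$. $\kappa=\min_{\emptyset\neq J\subseteq J_0}\|\sum_{j\in J}f_j\|^2$ and, for $1\le l\le s$, $\kappa_l=\min_{J'\subseteq J_0,|J'|=l}\|\sum_{j\in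 J'}f_j\|^2$. $\epsilon'_{q^*}$ is a positive number such that $\|\sum_{j\in J}g_j\|^2\le(1+\epsilon'_{q^*})\sum_{j\in J}\|g_j\|^2$ for all $J$ with $|J|\le q^*$ and all $g_j\in H_j$. Assumption 2: each $X_j$ takes values in $[0,1]$ and has a density $p_j$ with respect to Lebesgue measure with $c\le p_j\le 1/c$ for a constant $c>0$, and $f_j\in\tilde W_j(\alpha_j,K_j)=\{\sum_{k\ge1}\theta_k\phi_k:\sum_{k\ge1}(2\pi k)^{2\alpha_j}(\theta_{2k}^2+\theta_{2k+1}^2)\le K_j^2\}$ with $\alpha_j>1/2$, $K_j>0$, where $\phi_1=1$, $\phi_{2k}(x)=\sqrt2\cos(2\pi kx)$, $\phi_{2k+1}(x)=\sqrt2\sin(2\pi kx)$, $k\ge1$, on $[0,1]$. Given integers $m_j\ge1$, $V_j$ is the intersection of $H_j$ with the linear span of $\phi_1(x_j),\dots,\phi_{m_j}(x_j)$; $V_J=\sum_{j\in J}V_j$, $d_J=\dim V_J$, $d_l=\max_{|J|=l}d_J$. $C_j>0$ denotes a constant depending only on $\alpha_j$ and $c$ such that $\|h-\Pi_{V_j}h\|^2\le C_jK_j^2m_j^{-2\alpha_j}$ and $\|h-\Pi_{V_j}h\|_\infty^2\le C_jK_j^2m_j^{1-2\alpha_j}$ for all $h\in\tilde W_j(\alpha_j,K_j)\cap H_j$ and all $m_j\ge1$, where $\Pi_{V_j}$ is the orthogonal projection onto $V_j$. Condition (L): $m_j\ge\big(C_jK_j^2q^*(1+\epsilon'_{q^*})/(c'(1-\rho_{q^*}^2)\kappa)\big)^{1/(2\alpha_j)}$,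 where $c'\in(0,1)$ is a constant. Condition (C): $\frac23(1-\sqrt{c'})^2-8\frac{1+\delta}{(1-\delta)^2}c'\ge\frac12$. The data $(Y^i,X^i)$, $i=1,\dots,n$, are independent copies of $(Y,X)$, and $\mathbf Y=(Y^1,\dots,Y^n)^T$. The empirical norm is $\|h\|_n^2=\frac1n\sum_{i=1}^nh(X^i)^2$ for functions and $\|u\|_n^2=\frac1n\|u\|_2^2$ for $u\in\mathbb R^n$. $\hat\Pi_J$ is the orthogonal projection of $\mathbb R^n$ onto $\{(g(X^1),\dots,g(X^n))^T:g\in V_J\}$. The estimator is $\hat J_0\in\arg\max_{J\subseteq\{1,\dots,q\},|J|\le q^*}\big(\|\hat\Pi_J\mathbf Y\|_n^2-\sigma^2d_J/n\big)$. For $0<\delta<1$ and $J\subseteq\{1,\dots,q\}$, $\mathcal E_{\delta,J}$ is the event that $(1-\delta)\|g\|^2\le\|g\|_n^2\le(1+\delta)\|g\|^2$ for all $g\in V_J$, and $\mathcal E_{\delta,q^*}=\bigcap_{J\subseteq\{1,\dots,q\},|J|\le q^*}\mathcal E_{\delta,J\cup J_0}$. *)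

(* Defs.v *)
From Stdlib Require Export Reals.
Open Scope R_scope.

Fixpoint sumR (n : nat) (f : nat -> R) : R :=
  match n with
  | O => 0
  | S k => sumR k f + f k
  end.

Definition binomR (n k : nat) : R :=
  if Nat.leb k n then C n k else 0.

(* The right-hand side error sum of Theorem 1:
   sum_{l=1}^{s} sum_{m=0}^{qs-(s-l)} binom(s,l) binom(q-s,m)
     4 exp(-c1 n^2 (1-rho^2)^2 kap_l^2 /
              (sigma^4 d_{qs-s+l} + sigma^2 n (1-rho^2) kap_l)) *)
Definition thm1_sum (c1 : R) (q qs s n : nat) (d : nat -> nat)
    (rho sigma : R) (kap : nat -> R) : R :=
  sumR s (fun i => let l := S i in
    sumR (S (qs - (s - l))%nat) (fun m =>
      binomR s l * binomR (q - s)%nat m * 4 *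
      exp (- c1 * ((INR n)^2 * (1 - rho^2)^2 * (kap l)^2) /
             (sigma^4 * INR (d (qs - s + l)%nat) + sigma^2 * INR n * (1 - rho^2) * kap l)))).

Definition logeq (q qs : nat) : R := ln (exp 1 * INR q / INR qs).

(* Main.v *)
Require Import Defs.
From Stdlib Require Import Reals Lra Lia Psatz.
Open Scope R_scope.

Lemma exple x y : x <= y -> exp x <= exp y.
Proof. intros [H|H]; [left; apply exp_increasing; exact H | subst; lra]. Qed.

Lemma lnle x y : 0 < x -> x <= y -> ln x <= ln y.
Proof. intros Hx [H|H]; [left; apply ln_increasing; auto | subst; lra]. Qed.

Lemma sumR_le n f g : (forall i, (i < n)%nat -> f i <= g i) -> sumR n f <= sumR n g.
Proof.
  induction n; simpl; intros H; [lra|].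
  apply Rplus_le_compat; [apply IHn; intros; apply H; lia | apply H; lia].
Qed.

Lemma sumR_const n c : sumR n (fun _ => c) = INR n * c.
Proof. induction n; simpl sumR; [simpl; ring | rewrite IHn, S_INR; ring]. Qed.

Lemma sum_f_ge (f : nat -> R) n i : (forall k, 0 <= f k) -> (i <= n)%nat -> f i <= sum_f_R0 f n.
Proof.
  intros Hf; induction n; intros Hi.
  - assert (i = 0%nat) by lia; subst; simpl; lra.
  - simpl. destruct (Nat.eq_dec i (S n)) as [->|Hne].
    +
      assert (0 <= sum_f_R0 f n).
      { clear IHn Hi. induction n; simpl; [apply Hf|]. pose proof (Hf (S n)); lra. }
      lra.
    + pose proof (IHn ltac:(lia)). pose proof (Hf (S n)); lra.
Qed.

Lemma C_nonneg n k : 0 <= C n k.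
Proof.
  unfold C, Rdiv; apply Rmult_le_pos; [apply pos_INR|].
  left; apply Rinv_0_lt_compat, Rmult_lt_0_compat; apply INR_fact_lt_0.
Qed.

Lemma binomR_nonneg n k : 0 <= binomR n k.
Proof. unfold binomR; destruct (Nat.leb k n); [apply C_nonneg | lra]. Qed.

Lemma exp_pow x n : exp x ^ n = exp (INR n * x).
Proof.
  induction n; simpl pow; [simpl; rewrite Rmult_0_l, exp_0; ring|].
  rewrite IHn, S_INR, <- exp_plus; f_equal; ring.
Qed.

Lemma binom_bound N m x : 0 <= x -> binomR N m * x ^ m <= exp (INR N * x).
Proof.
  intros Hx. unfold binomR. destruct (Nat.leb m N) eqn:E.
  - apply Nat.leb_le in E.
    rewrite <- exp_pow.
    apply Rle_trans with ((x + 1) ^ N).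
    + rewrite binomial.
      replace (C N m * x ^ m) with (C N m * x ^ m * 1 ^ (N - m)) by (rewrite pow1; ring).
      apply (sum_f_ge (fun i => C N i * x ^ i * 1 ^ (N - i))); auto.
      intros k; rewrite pow1; rewrite Rmult_1_r; apply Rmult_le_pos; [apply C_nonneg | apply pow_le; auto].
    + apply pow_incr; split; [lra|]. pose proof (exp_ineq1_le x); lra.
  - rewrite Rmult_0_l; left; apply exp_pos.
Qed.

Lemma div_le_mul A B C : 0 < B -> A / B <= C -> A <= C * B.
Proof.
  intros HB H. replace A with (A / B * B) by (field; lra).
  apply Rmult_le_compat_r; lra.
Qed.


Theorem corollary1 :
  forall c1 : R, 0 < c1 ->
  forall c2 : R, 0 < c2 ->
  exists c3 : R, 0 < c3 /\
  forall (q qs s n : nat) (d : nat -> nat) (rho sigma kappa : R)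
         (kap : nat -> R) (P PE : R),
    (1 <= s)%nat -> (s <= qs)%nat -> (qs <= q)%nat -> (1 <= n)%nat ->
    (forall l l', (l <= l')%nat -> (l' <= qs)%nat -> (d l <= d l')%nat) ->
    (1 <= d qs)%nat ->
    -1 < rho < 1 ->
    0 < sigma ->
    0 < kappa ->
    (forall l, (1 <= l <= s)%nat -> kappa <= kap l) ->
    0 <= P <= 1 -> 0 <= PE <= 1 ->
    P >= 1 - PE - exp (- (3 * INR n) / (16 * INR (d qs)))
           - thm1_sum c1 q qs s n d rho sigma kap ->
    Rmax (Rmax (sigma^2 * sqrt (INR qs * INR (d qs) * logeq q qs)
                  / ((1 - rho^2) * kappa))
               (sigma^2 * INR qs * logeq q qs / ((1 - rho^2) * kappa)))
         (INR (d qs) * ln (INR q))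
      <= c3 * INR n ->
    P >= 1 - PE - Rpower (INR q) (- c2).
Proof.
  intros c1 Hc1 c2 Hc2.
  set (c3 := Rmin 1 (Rmin (3/(16*(c2+1))) (c1/(2*(c2+7))))).
  assert (Hc3 : 0 < c3).
  { apply Rmin_pos; [lra|]. apply Rmin_pos; apply Rdiv_lt_0_compat; lra. }
  assert (Hc31 : c3 <= 1) by apply Rmin_l.
  assert (Hc3a : c3 * (16*(c2+1)) <= 3).
  { replace 3 with (3/(16*(c2+1)) * (16*(c2+1))) by (field; lra).
    apply Rmult_le_compat_r; [lra|]. unfold c3.
    eapply Rle_trans; [apply Rmin_r | apply Rmin_l]. }
  assert (Hc3b : c3 * (2*(c2+7)) <= c1).
  { replace c1 with (c1/(2*(c2+7)) * (2*(c2+7))) by (field; lra).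
    apply Rmult_le_compat_r; [lra|]. unfold c3.
    eapply Rle_trans; [apply Rmin_r | apply Rmin_r]. }
  exists c3; split; [exact Hc3|].
  intros q qs s n d rho sigma kappa kap P PE Hs1 Hsqs Hqsq Hn1 Hmono Hd1 Hrho
    Hsig Hkap Hkapl HP HPE Hthm Hmax.
  destruct (Nat.eq_dec q 1) as [->|Hq1].
  { unfold Rpower. rewrite INR_1, ln_1, Rmult_0_r, exp_0. lra. }
  assert (HQ : 2 <= INR q).
  { assert (H2 : (2 <= q)%nat) by lia. apply le_INR in H2. simpl in H2. lra. }
  set (rQ := INR q) in *.
  assert (HS : 1 <= INR qs) by (apply (le_INR 1); lia).
  assert (HSQ : INR qs <= rQ) by (apply le_INR; lia).
  set (rS := INR qs) in *.
  assert (Hn : 1 <= INR n) by (apply (le_INR 1); lia).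
  set (rn := INR n) in *.
  assert (HD : 1 <= INR (d qs)) by (apply (le_INR 1); lia).
  set (rD := INR (d qs)) in *.
  set (t := 1 - rho^2) in *.
  assert (Ht : 0 < t) by (unfold t; nra).
  set (lQ := ln rQ).
  set (lS := ln rS).
  assert (HlSQ : lS <= lQ) by (apply lnle; lra).
  assert (HlS0 : 0 <= lS) by (unfold lS; rewrite <- ln_1; apply lnle; lra).
  assert (HlS1 : lS <= rS - 1).
  { pose proof (exp_ineq1_le lS). unfold lS in *. rewrite exp_ln in H; lra. }
  assert (HlQ0 : 0 <= lQ) by (unfold lQ; rewrite <- ln_1; apply lnle; lra).
  set (L := logeq q qs) in *.
  assert (HL : L = 1 + lQ - lS).
  { unfold L, logeq. fold rQ rS. unfold Rdiv.
    rewrite ln_mult, ln_mult, ln_exp, ln_Rinv.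
    all: first [ unfold lQ, lS; ring | apply Rmult_lt_0_compat; [apply exp_pos|lra] | apply Rinv_0_lt_compat; lra | apply exp_pos | lra ]. }
  assert (HL1 : 1 <= L) by lra.
  assert (HSL : 1 + lQ <= rS * L).
  { rewrite HL. nra. }
  assert (He1 : 2 <= exp 1) by (pose proof (exp_ineq1_le 1); lra).
  set (Rp := Rpower rQ (- c2)).
  assert (HRp : Rp = exp (- c2 * lQ)) by reflexivity.
  assert (HT1 : exp (- (3 * rn) / (16 * rD)) <= Rp / 2).
  { assert (H1 : rD * lQ <= c3 * rn) by (eapply Rle_trans; [apply Rmax_r | exact Hmax]).
    set (u := 3 * rn / (16 * rD)).
    assert (Hu : u * (16 * rD) = 3 * rn) by (unfold u; field; lra).
    assert (Hu2 : (c2 + 1) * lQ <= u).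
    { assert (H2 : (c2+1) * (rD * lQ) <= (c2+1) * (c3 * rn)) by (apply Rmult_le_compat_l; lra).
      nra. }
    apply Rle_trans with (exp (- c2 * lQ + - lQ)).
    { apply exple. unfold Rdiv. rewrite Ropp_mult_distr_l_reverse. fold (3 * rn / (16 * rD)). fold u. nra. }
    rewrite exp_plus, exp_Ropp. unfold lQ. rewrite exp_ln by lra. rewrite HRp. fold lQ.
    pose proof (exp_pos (- c2 * lQ)).
    assert (/ rQ <= / 2) by (apply Rinv_le_contravar; lra).
    assert (exp (- c2 * lQ) * / rQ <= exp (- c2 * lQ) * / 2) by (apply Rmult_le_compat_l; lra).
    lra. }
  set (K := c1 / (2 * c3)).
  assert (HK : c2 + 7 <= K).
  { unfold K. apply Rmult_le_reg_r with (2 * c3); [lra|].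
    replace (c1 / (2 * c3) * (2 * c3)) with c1 by (field; lra). nra. }
  set (B := exp rS * (exp rS * (rQ / rS) ^ qs) * 4 * exp (- K * (rS * L))).
  assert (Hterm : forall i m, (i < s)%nat -> (m <= qs - (s - S i))%nat ->
     binomR s (S i) * binomR (q - s) m * 4 *
      exp (- c1 * ((rn)^2 * (1 - rho^2)^2 * (kap (S i))^2) /
             (sigma^4 * INR (d (qs - s + S i)%nat) + sigma^2 * rn * (1 - rho^2) * kap (S i)))
     <= B).
  { intros i m Hi Hm. fold t. unfold B.
    apply Rmult_le_compat.
    - apply Rmult_le_pos; [|lra]. apply Rmult_le_pos; apply binomR_nonneg.
    - left; apply exp_pos.
    - apply Rmult_le_compat; try lra.
      + apply Rmult_le_pos; apply binomR_nonneg.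
      + apply Rmult_le_compat; try apply binomR_nonneg.
        * pose proof (binom_bound s (S i) 1 ltac:(lra)). rewrite pow1, !Rmult_1_r in H.
          eapply Rle_trans; [exact H | apply exple; apply le_INR; lia].
        * pose proof (binom_bound (q - s) m (rS / rQ) ltac:(apply Rmult_le_pos; [lra | left; apply Rinv_0_lt_compat; lra])).
          assert (HN : INR (q - s) * (rS / rQ) <= rS).
          { assert (INR (q - s) <= rQ) by (apply le_INR; lia).
            apply Rle_trans with (rQ * (rS / rQ)); [apply Rmult_le_compat_r; [apply Rmult_le_pos; [lra | left; apply Rinv_0_lt_compat; lra]|lra] | right; field; lra]. }
          replace (binomR (q - s) m) with (binomR (q - s) m * (rS / rQ) ^ m * (rQ / rS) ^ m).
          2:{ rewrite Rmult_assoc, <- Rpow_mult_distr.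
              replace (rS / rQ * (rQ / rS)) with 1 by (field; lra). rewrite pow1; ring. }
          apply Rmult_le_compat.
          -- apply Rmult_le_pos; [apply binomR_nonneg | apply pow_le; apply Rmult_le_pos; [lra | left; apply Rinv_0_lt_compat; lra]].
          -- apply pow_le; apply Rmult_le_pos; [lra | left; apply Rinv_0_lt_compat; lra].
          -- eapply Rle_trans; [exact H | apply exple; exact HN].
          -- apply Rle_pow; [|lia]. apply Rmult_le_reg_r with rS; [lra|].
             replace (rQ / rS * rS) with rQ by (field; lra). lra.
    - apply exple.
      set (k := kap (S i)).
      assert (Hk : kappa <= k) by (apply Hkapl; lia).
      set (Dl := INR (d (qs - s + S i)%nat)).
      assert (HDl : Dl <= rD) by (apply le_INR; apply Hmono; lia).
      assert (HDl0 : 0 <= Dl) by apply pos_INR.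
      assert (Hc1' : sigma ^ 2 * (rS * L) <= c3 * rn * (t * kappa)).
      { apply div_le_mul; [apply Rmult_lt_0_compat; lra|].
        replace (sigma ^ 2 * (rS * L)) with (sigma ^ 2 * rS * L) by ring.
        eapply Rle_trans; [| exact Hmax]. eapply Rle_trans; [|apply Rmax_l]. apply Rmax_r. }
      assert (Hc2' : sigma ^ 2 * sqrt (rS * rD * L) <= c3 * rn * (t * kappa)).
      { apply div_le_mul; [apply Rmult_lt_0_compat; lra|].
        eapply Rle_trans; [| exact Hmax]. eapply Rle_trans; [|apply Rmax_l]. apply Rmax_l. }
      assert (Hsq : sqrt (rS * rD * L) * sqrt (rS * rD * L) = rS * rD * L).
      { apply sqrt_sqrt. apply Rmult_le_pos; [apply Rmult_le_pos|]; lra. }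
      assert (Hsq0 : 0 <= sqrt (rS * rD * L)) by apply sqrt_pos.
      assert (Hc2'' : sigma ^ 4 * (rS * rD * L) <= (c3 * rn * (t * kappa)) ^ 2).
      { rewrite <- Hsq. replace (sigma ^ 4 * (sqrt (rS * rD * L) * sqrt (rS * rD * L)))
          with ((sigma ^ 2 * sqrt (rS * rD * L)) ^ 2) by ring.
        apply pow_incr; split; [|exact Hc2']. apply Rmult_le_pos; [apply pow_le|]; lra. }
      set (Y := sigma ^ 4 * Dl + sigma ^ 2 * rn * t * k).
      set (X := rn ^ 2 * t ^ 2 * k ^ 2).
      assert (HY : 0 < Y).
      { unfold Y. assert (0 < sigma ^ 2 * rn * t * k).
        { repeat apply Rmult_lt_0_compat; try lra; apply pow_lt; lra. }
        assert (0 <= sigma ^ 4 * Dl) by (apply Rmult_le_pos; [apply pow_le|]; lra). lra. }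
      assert (Hkey : (rS * L) * Y <= 2 * c3 * X).
      { unfold X, Y.
        assert (Hs4 : 0 <= sigma ^ 4) by (apply pow_le; lra).
        assert (Hs2 : 0 < sigma ^ 2) by (apply pow_lt; lra).
        assert (HM : 0 <= rS * L) by nra.
        assert (A1 : rS * L * (sigma ^ 4 * Dl) <= c3 * (rn ^ 2 * t ^ 2 * k ^ 2)).
        { apply Rle_trans with (sigma ^ 4 * (rS * rD * L)).
          { replace (sigma ^ 4 * (rS * rD * L)) with (rS * L * (sigma ^ 4 * rD)) by ring.
            apply Rmult_le_compat_l; [exact HM|]. apply Rmult_le_compat_l; lra. }
          eapply Rle_trans; [exact Hc2''|].
          replace ((c3 * rn * (t * kappa)) ^ 2) with (c3 * c3 * (rn^2 * t^2 * kappa^2)) by ring.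
          assert (0 <= rn^2 * t^2 * kappa^2) by (apply Rmult_le_pos; [apply Rmult_le_pos|]; apply pow_le; lra).
          assert (kappa ^ 2 <= k ^ 2) by (apply pow_incr; lra).
          assert (rn^2 * t^2 * kappa^2 <= rn^2 * t^2 * k^2).
          { apply Rmult_le_compat_l; [|lra]. apply Rmult_le_pos; apply pow_le; lra. }
          nra. }
        assert (A2 : rS * L * (sigma ^ 2 * rn * t * k) <= c3 * (rn ^ 2 * t ^ 2 * k ^ 2)).
        { replace (rS * L * (sigma ^ 2 * rn * t * k)) with ((sigma ^ 2 * (rS * L)) * (rn * t * k)) by ring.
          apply Rle_trans with ((c3 * rn * (t * kappa)) * (rn * t * k)).
          { apply Rmult_le_compat_r; [|exact Hc1']. repeat apply Rmult_le_pos; lra. }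
          replace (c3 * rn * (t * kappa) * (rn * t * k)) with ((c3 * rn ^ 2 * t ^ 2 * k) * kappa) by ring.
          replace (c3 * (rn ^ 2 * t ^ 2 * k ^ 2)) with ((c3 * rn ^ 2 * t ^ 2 * k) * k) by ring.
          apply Rmult_le_compat_l; [|lra].
          repeat apply Rmult_le_pos; try lra; apply pow_le; lra. }
        lra. }
      assert (Hdiv : rS * L / (2 * c3) <= X / Y).
      { assert (E : X / Y - rS * L / (2 * c3) = (2 * c3 * X - rS * L * Y) / (2 * c3 * Y)) by (field; lra).
        assert (0 <= (2 * c3 * X - rS * L * Y) / (2 * c3 * Y)).
        { unfold Rdiv; apply Rmult_le_pos; [lra|]. left; apply Rinv_0_lt_compat; nra. }
        lra. }
      assert (E2 : - c1 * X / Y = - (c1 * (X / Y))) by (unfold Rdiv; ring).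
      fold X Y. rewrite E2.
      assert (E3 : K * (rS * L) = c1 * (rS * L / (2 * c3))) by (unfold K; field; lra).
      assert (c1 * (rS * L / (2 * c3)) <= c1 * (X / Y)) by (apply Rmult_le_compat_l; lra).
      lra. }
  assert (HB0 : 0 <= B).
  { unfold B. pose proof (exp_pos rS). pose proof (exp_pos (- K * (rS * L))).
    assert (0 <= (rQ / rS) ^ qs) by (apply pow_le; apply Rmult_le_pos; [lra | left; apply Rinv_0_lt_compat; lra]).
    repeat apply Rmult_le_pos; lra. }
  assert (Hsum : thm1_sum c1 q qs s n d rho sigma kap <= rS * (rS + 1) * B).
  { unfold thm1_sum.
    apply Rle_trans with (sumR s (fun _ => (rS + 1) * B)).
    - apply sumR_le. intros i Hi. cbv beta zeta.
      apply Rle_trans with (sumR (S (qs - (s - S i))) (fun _ => B)).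
      + apply sumR_le. intros m Hm. apply Hterm; lia.
      + rewrite sumR_const. apply Rmult_le_compat_r; [exact HB0|].
        rewrite S_INR. assert (INR (qs - (s - S i)) <= rS) by (apply le_INR; lia). lra.
    - rewrite sumR_const. rewrite <- Rmult_assoc. apply Rmult_le_compat_r; [exact HB0|].
      apply Rmult_le_compat_r; [lra|]. apply le_INR; lia. }
  assert (HQS : (rQ / rS) ^ qs = exp (rS * (lQ - lS))).
  { rewrite <- Rpower_pow by (apply Rdiv_lt_0_compat; lra). unfold Rpower. fold rS.
    f_equal. f_equal. unfold Rdiv. rewrite ln_mult, ln_Rinv.
    all: first [ unfold lQ, lS; ring | apply Rinv_0_lt_compat; lra | lra ]. }
  assert (HB2 : rS * (rS + 1) * B <= Rp / 2).
  { unfold B. rewrite HQS.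
    assert (E : rS * (rS + 1) * (exp rS * (exp rS * exp (rS * (lQ - lS))) * 4 * exp (- K * (rS * L)))
               = (rS * (rS + 1) * 4) * (exp rS * exp rS * exp (rS * (lQ - lS)) * exp (- K * (rS * L)))) by ring.
    rewrite E.
    assert (H4 : rS * (rS + 1) * 4 <= exp rS * exp rS * exp (2 * rS)).
    { assert (rS <= exp rS) by (pose proof (exp_ineq1_le rS); lra).
      assert (rS + 1 <= exp rS) by (pose proof (exp_ineq1_le rS); lra).
      assert (4 <= exp (2 * rS)).
      { apply Rle_trans with (exp 2); [|apply exple; lra].
        replace 2 with (1 + 1) by ring. rewrite exp_plus. nra. }
      apply Rmult_le_compat; [nra | lra | | lra].
      apply Rmult_le_compat; lra. }
    apply Rle_trans with (exp rS * exp rS * exp (2 * rS) *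
        (exp rS * exp rS * exp (rS * (lQ - lS)) * exp (- K * (rS * L)))).
    { apply Rmult_le_compat_r; [|exact H4].
      pose proof (exp_pos rS). pose proof (exp_pos (rS * (lQ - lS))). pose proof (exp_pos (- K * (rS * L))).
      repeat apply Rmult_le_pos; lra. }
    rewrite <- !exp_plus.
    rewrite HRp.
    apply Rle_trans with (exp (- (1) + - c2 * lQ)).
    { apply exple.
      assert (HM : rS * L = rS + rS * (lQ - lS)) by (rewrite HL; ring).
      assert (HSM : rS <= rS * L) by nra.
      assert (HKM : (c2 + 7) * (rS * L) <= K * (rS * L)) by (apply Rmult_le_compat_r; nra).
      nra. }
    rewrite exp_plus, exp_Ropp.
    assert (/ exp 1 <= / 2) by (apply Rinv_le_contravar; lra).
    pose proof (exp_pos (- c2 * lQ)).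
    nra. }
  lra.
Qed.
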